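(* Fix $S\in\mathbb{R}^{K_0\times K_1}$, $\gamma_{(0)}$ and $\theta=(\theta^{(1)},\dots,\theta^{(N)})$ with $\theta^{(n)}\in\mathbb{P}_L^{K_n\times K_{n+1}}$ having all entries positive. For $n=1,\dots,N$ define $A_{(n)}\in\mathbb{R}^{K_{n+1}\times K_n}$ by $\{A_{(n)}\}_{k_{n+1},k_n}=-\delta_n\log\theta^{(n)}_{k_n,k_{n+1}}$, and set $A_{(N+1)}:=0$. If $\min\{\epsilon_n: n=1,\dots,N+1\}>\max\{\|A_{(n)}\|_2+\|A_{(n+1)}\|_2: n=1,\dots,N\}$, then the EON objective $L$, viewed as a function of $(\gamma_{(1)},\dots,\gamma_{(N+1)})\in\mathbb{P}_L^{K_1\times T}\times\dots\times\mathbb{P}_L^{K_{N+1}\times T}$, is strictly convex, and consequently its minimizer $\hat\Gamma$ is unique.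
   Context: $\mathbb{P}^K$ is the probability simplex; $\mathbb{P}_L^{a\times b}$ are $a\times b$ matrices with all columns in $\mathbb{P}^a$. $\|\cdot\|_2$ is the spectral norm. Data $X(1),\dots,X(T)\in\mathbb{R}^{K_0}$, $\gamma_{(0)}\in\mathbb{R}^{K_0\times T}$ nonnegative, $\delta_n>0$, $\epsilon_n>0$. Natural logarithms with $0\log0=0$. The EON objective is $L=\sum_{t=1}^T\Big(\sum_{k_1}\{\gamma_{(1)}\}_{k_1,t}\sum_{d}\{\gamma_{(0)}\}_{d,t}(\{X(t)\}_d-S_{d,k_1})^2-\sum_{n=1}^N\delta_n\sum_{k_n,k_{n+1}}\{\gamma_{(n)}\}_{k_n,t}\{\gamma_{(n+1)}\}_{k_{n+1},t}\log\theta^{(n)}_{k_n,k_{n+1}}+\sum_{n=0}^{N+1}\epsilon_n\sum_{k_n}\{\gamma_{(n)}\}_{k_n,t}\log\{\gamma_{(n)}\}_{k_n,t}\Big)$. *)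

(* Defs.v *)
From HB Require Import structures.
From mathcomp Require Import all_boot all_order all_algebra.
From mathcomp Require Import all_classical all_reals all_analysis.
Set Implicit Arguments. Unset Strict Implicit. Unset Printing Implicit Defensive.
Import Order.TTheory GRing.Theory Num.Theory.
Local Open Scope ring_scope.
Local Open Scope classical_set_scope.

Section EON.
Variable R : realType.

Definition xlogx (x : R) : R := if x == 0 then 0 else x * ln x.

Definition vnorm2 (n : nat) (v : 'cV[R]_n) : R :=
  Num.sqrt (\sum_(i < n) v i 0 ^+ 2).

Definition specnorm (m n : nat) (A : 'M[R]_(m, n)) : R :=
  sup [set r | exists v : 'cV[R]_n, vnorm2 v <= 1 /\ r = vnorm2 (A *m v)].

(* A matrix lies in P_L^{a x b}: every column lies in the probability simplex *)
Definition colstoch (a b : nat) (M : 'M[R]_(a, b)) : Prop :=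
  (forall i j, 0 <= M i j) /\ (forall j, \sum_(i < a) M i j = 1).

Definition nextord (N : nat) (i : 'I_N) : 'I_N.+1 := @Ordinal N.+1 i.+1 (ltn_ord i).
Definition prevord (N : nat) (i : 'I_N) : 'I_N.+1 := widen_ord (leqnSn N) i.

(* Indexing conventions: layer sizes K n for n = 0..N+1;
   theta i (i : 'I_N) is theta^(i+1), a K_(i+1) x K_(i+2) matrix;
   G j (j : 'I_N.+1) is gamma_(j+1), a K_(j+1) x T matrix;
   delta n, eps n use the paper's natural indices. *)

Definition Amat (N : nat) (K : nat -> nat) (delta : nat -> R)
  (theta : forall i : 'I_N, 'M[R]_(K i.+1, K i.+2)) (i : 'I_N)
  : 'M[R]_(K i.+2, K i.+1) :=
  \matrix_(k' < K i.+2, k < K i.+1) (- delta i.+1 * ln (theta i k k')).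

(* normA m = ||A_(m+1)||_2 for m < N, and 0 otherwise (in particular A_(N+1) := 0) *)
Definition normA (N : nat) (K : nat -> nat) (delta : nat -> R)
  (theta : forall i : 'I_N, 'M[R]_(K i.+1, K i.+2)) (m : nat) : R :=
  match (insub m : option 'I_N) with
  | Some i => specnorm (Amat delta theta i)
  | None => 0
  end.

Definition EON_L (N T : nat) (K : nat -> nat) (X : 'M[R]_(K 0%N, T))
  (S : 'M[R]_(K 0%N, K 1%N)) (gamma0 : 'M[R]_(K 0%N, T))
  (delta eps : nat -> R) (theta : forall i : 'I_N, 'M[R]_(K i.+1, K i.+2))
  (G : forall j : 'I_N.+1, 'M[R]_(K j.+1, T)) : R :=
  \sum_(t < T)
    ( \sum_(k1 < K 1) (G ord0 k1 t) *
          (\sum_(d < K 0) gamma0 d t * (X d t - S d k1) ^+ 2)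
    - \sum_(i < N) delta i.+1 *
          (\sum_(k < K i.+1) \sum_(k' < K i.+2)
              (G (prevord i) k t) * (G (nextord i) k' t) * ln (theta i k k'))
    + ( eps 0 * \sum_(d < K 0) xlogx (gamma0 d t)
      + \sum_(j < N.+1) eps j.+1 * \sum_(k < K j.+1) xlogx (G j k t))).

End EON.

(* Main.v *)
Require Import Defs.
From HB Require Import structures.
From mathcomp Require Import all_boot all_order all_algebra.
From mathcomp Require Import all_classical all_reals all_analysis.
From mathcomp Require Import ring lra.
Import Order.TTheory GRing.Theory Num.Theory.
Local Open Scope ring_scope.
Section S. Variable R : realType.
Lemma ln_ge_1V (c : R) : 0 < c -> 1 - c^-1 <= ln c.
Proof.
move=> c0.
have ci : 0 < c^-1 by rewrite invr_gt0.
have h : ln (1 + (c^-1 - 1)) <= c^-1 - 1 by apply: le_ln1Dx; lra.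
move: h; rewrite addrC subrK lnV ?posrE //; lra.
Qed.
Lemma ln_le_1 (c : R) : 0 < c -> ln c <= c - 1.
Proof.
move=> c0; have := @le_ln1Dx R (c - 1); rewrite subrKC; apply; lra.
Qed.

Lemma ln_lb (w : R) : 1 <= w -> 2 * (w - 1) <= (w + 1) * ln w.
Proof.
move=> w1.
pose f := fun y : R => (y + 1) * ln y - 2 * y.
pose df := fun y : R => ln y + y^-1 - 1.
have D (y : R) : 0 < y -> is_derive y 1 f (df y).
  move=> y0; have d1 := is_derive1_ln y0.
  apply: is_derive_eq; rewrite /df.
  change ((y + 1) * y^-1 + ln y * (1 + 0) - 2 * 1 = ln y + y^-1 - 1).
  rewrite mulrDl divff ?gt_eqF // mul1r; lra.
have [c cin E] : exists2 c, c \in `[1, w] & f w - f 1 = df c * (w - 1).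
  apply: MVT_segment => //.
    move=> y; rewrite in_itv /= => /andP[y1 _]; apply: D; lra.
  apply: derivable_within_continuous => y; rewrite in_itv /= => /andP[y1 _].
  have y0 : 0 < y by lra.
  exact: (@ex_derive _ _ _ _ _ _ _ (D y y0)).
move: cin; rewrite in_itv /= => /andP[c1 cw].
have c0 : 0 < c by lra.
have : 0 <= df c by rewrite /df; have := @ln_ge_1V c c0; lra.
move: E; rewrite /f ln1 mulr0. move=> E dc.
have : 0 <= df c * (w - 1) by apply: mulr_ge0 => //; lra.
rewrite -E. lra.
Qed.
Lemma ln_ub (w : R) : 1 <= w -> 2 * (w * ln w) <= w ^+ 2 - 1.
Proof.
move=> w1.
pose f := fun y : R => y ^+ 2 - 2 * (y * ln y).
pose df := fun y : R => 2 * (y - 1 - ln y).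
have D (y : R) : 0 < y -> is_derive y 1 f (df y).
  move=> y0; have d1 := is_derive1_ln y0.
  apply: is_derive_eq; rewrite /df.
  change (y * 1 + y * 1 - 2 * (y * y^-1 + ln y * 1) = 2 * (y - 1 - ln y)).
  rewrite divff ?gt_eqF //; lra.
have [c cin E] : exists2 c, c \in `[1, w] & f w - f 1 = df c * (w - 1).
  apply: MVT_segment => //.
    move=> y; rewrite in_itv /= => /andP[y1 _]; apply: D; lra.
  apply: derivable_within_continuous => y; rewrite in_itv /= => /andP[y1 _].
  have y0 : 0 < y by lra.
  exact: (@ex_derive _ _ _ _ _ _ _ (D y y0)).
move: cin; rewrite in_itv /= => /andP[c1 cw].
have c0 : 0 < c by lra.
have : 0 <= df c by rewrite /df; have := @ln_le_1 c c0; lra.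
move: E; rewrite /f ln1 mulr0 expr1n. move=> E dc.
have : 0 <= df c * (w - 1) by apply: mulr_ge0 => //; lra.
rewrite -E. lra.
Qed.
Lemma breg (x z : R) : 0 <= x <= 1 -> 0 < z <= 1 ->
  z * ln z + (ln z + 1) * (x - z) + (x - z) ^+ 2 / 2 <= x * ln x.
Proof.
move=> /andP[x0 x1] /andP[z0 z1].
have E : z * ln z + (ln z + 1) * (x - z) = x * ln z + (x - z) by ring.
rewrite E.
have [->|xp] := eqVneq x 0.
  rewrite !mul0r; nra.
have xpos : 0 < x by rewrite lt_neqAle eq_sym xp x0.
case: (lerP z x) => zx.
  have w1 : 1 <= x / z by rewrite ler_pdivlMr // mul1r.
  have := @ln_lb (x/z) w1; rewrite ln_div ?posrE //.
  have [L LE] : {L | L = ln x - ln z} by exists (ln x - ln z).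
  rewrite -LE => H.
  have L0 : 0 <= L by rewrite LE subr_ge0 ler_ln ?posrE.
  have H2 : 2 * (x - z) <= (x + z) * L.
    have := ler_pM2r z0; move=> <-. 
    have -> : (x + z) * L * z = (x / z + 1) * L * z * z by field; rewrite gt_eqF.
    have -> : 2 * (x - z) * z = 2 * (x / z - 1) * z * z by field; rewrite gt_eqF.
    by rewrite ler_pM2r // ler_pM2r.
  have H3 : x - z <= L by nra.
  have -> : x * ln x = x * ln z + x * L by rewrite LE; ring.
  nra.
have w1 : 1 <= z / x by rewrite ler_pdivlMr // mul1r ltW.
have := @ln_ub (z/x) w1; rewrite ln_div ?posrE //.
have [M ME] : {M | M = ln z - ln x} by exists (ln z - ln x).
rewrite -ME => H.
have H2 : 2 * z * x * M <= z ^+ 2 - x ^+ 2.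
  have := ler_pM2r (exprn_gt0 2 xpos); move=> <-.
  have -> : 2 * z * x * M * x ^+ 2 = 2 * (z / x * M) * x ^+ 2 * x ^+ 2 by field; rewrite gt_eqF.
  have -> : (z ^+ 2 - x ^+ 2) * x ^+ 2 = ((z / x) ^+ 2 - 1) * x ^+ 2 * x ^+ 2 by field; rewrite gt_eqF.
  by rewrite ler_pM2r ?exprn_gt0 // ler_pM2r ?exprn_gt0.
have -> : x * ln x = x * ln z - x * M by rewrite ME; ring.
have M0 : 0 <= M by rewrite ME subr_ge0 ler_ln ?posrE // ltW.
have K1 : 0 <= (z - x) ^+ 2 * (1 - z) by apply: mulr_ge0; [apply: sqr_ge0|lra].
have K : z * (2 * (x - z) + (x - z) ^+ 2 + 2 * x * M) <= 0 by nra.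
have K2 : 2 * (x - z) + (x - z) ^+ 2 + 2 * x * M <= 0.
  by rewrite -(pmulr_rle0 _ z0).
lra.
Qed.
End S.

Section B. Variable R : realType.
Lemma xlogxE (x : R) : xlogx x = x * ln x.
Proof. by rewrite /xlogx; case: eqP => [->|]; rewrite ?mul0r. Qed.

Lemma xlogx_gap (x y lam : R) : 0 <= x <= 1 -> 0 <= y <= 1 -> 0 < lam < 1 ->
  lam * (1 - lam) * (x - y) ^+ 2 / 2 <=
  lam * xlogx x + (1 - lam) * xlogx y - xlogx (lam * x + (1 - lam) * y).
Proof.
move=> /andP[x0 x1] /andP[y0 y1] /andP[l0 l1].
rewrite !xlogxE.
set z := lam * x + (1 - lam) * y.
have z0 : 0 <= z by rewrite /z; nra.
have z1 : z <= 1 by rewrite /z; nra.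
have [zz|zp] := eqVneq z 0.
  have xz : x = 0 by move: zz; rewrite /z; nra.
  have yz : y = 0 by move: zz; rewrite /z; nra.
  rewrite zz xz yz !mul0r !mulr0 subrr; lra.
have zpos : 0 < z by rewrite lt_neqAle eq_sym zp.
have Bx := @breg R x z ltac:(by rewrite x0 x1) ltac:(by rewrite zpos z1).
have By := @breg R y z ltac:(by rewrite y0 y1) ltac:(by rewrite zpos z1).
have Bx' := ler_wpM2l (ltW l0) Bx.
have By' : (1 - lam) * (z * ln z + (ln z + 1) * (y - z) + (y - z) ^+ 2 / 2) <= (1 - lam) * (y * ln y).
  by apply: ler_wpM2l => //; lra.
have E : lam * (z * ln z + (ln z + 1) * (x - z) + (x - z) ^+ 2 / 2) +
  (1 - lam) * (z * ln z + (ln z + 1) * (y - z) + (y - z) ^+ 2 / 2) =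
  z * ln z + lam * (1 - lam) * (x - y) ^+ 2 / 2 by rewrite /z; ring.
lra.
Qed.
End B.

Import numFieldNormedType.Exports.

Section C. Variable R : realType.

Lemma xlnx_small (t : R) : 0 < t <= 1 -> `|t * ln t| <= 2 * Num.sqrt t.
Proof.
move=> /andP[t0 t1].
have s0 : 0 < Num.sqrt t by rewrite sqrtr_gt0.
have st : Num.sqrt t ^+ 2 = t by rewrite sqr_sqrtr // ltW.
have E : ln t = 2 * ln (Num.sqrt t).
  by rewrite -{1}st lnXn // mulr_natl.
have L := @ln_ge_1V R _ s0.
have lt0 : ln t <= 0 by apply: ln_le0.
have P : 0 <= - (t * ln t) by nra.
rewrite -normrN ger0_norm //.
set s := Num.sqrt t in s0 st E L *.
have H : s ^+ 2 * (1 - s^-1) <= s ^+ 2 * ln s by rewrite ler_pM2l // exprn_gt0.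
have H2 : s ^+ 2 * (1 - s^-1) = s ^+ 2 - s.
  rewrite mulrBr mulr1 expr2 -mulrA divff ?mulr1 // gt_eqF //.
rewrite E -st.
nra.
Qed.
Lemma xlogx_cont (x : R) : {for x, continuous (@xlogx R)}.
Proof.
have -> : @xlogx R = (fun y => y * ln y) by apply: funext => y; rewrite xlogxE.
case: (ltgtP x 0) => [xn|xp|->].
- rewrite /prop_for /continuous_at ln0 ?ltW // mulr0.
  apply: cvg_near_cst.
  near=> y.
  rewrite ln0 ?mulr0 //.
  apply: ltW; near: y; exact: lt_nbhsl.
- apply: continuousM; first exact: cvg_id.
  exact: continuous_ln.
- rewrite /prop_for /continuous_at; apply/cvgrPdist_le => e e0.
  rewrite mul0r.
  pose d := Num.min 1 ((e / 2) ^+ 2).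
  have d0 : 0 < d by rewrite lt_min ltr01 exprn_gt0 // divr_gt0.
  apply/nbhs_ballP; exists d => // t; rewrite /ball /= sub0r normrN => ht.
  rewrite sub0r normrN.
  case: (lerP t 0) => t0.
    by rewrite ln0 // mulr0 normr0 ltW.
  have t1 : t <= 1.
    by apply: ltW; apply: (lt_le_trans (y:=d)); [rewrite -(gtr0_norm t0)| rewrite ge_min lexx].
  have H1 := @xlnx_small t ltac:(by rewrite t0 t1).
  have : Num.sqrt t < e / 2.
    have : t < (e / 2) ^+ 2.
      apply: (lt_le_trans (y:=d)); first by rewrite -(gtr0_norm t0).
      by rewrite ge_min lexx orbT.
    move=> H.
    have H' : Num.sqrt t < Num.sqrt ((e/2)^+2) by rewrite ltr_sqrt // exprn_gt0 // divr_gt0.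
    by move: H'; rewrite sqrtr_sqr ger0_norm // ltW // divr_gt0.
  lra.
Unshelve. all: by end_near.
Qed.
End C.

Set Implicit Arguments. Unset Strict Implicit.
Local Open Scope classical_set_scope.

Section D. Variable R : realType.

Definition sqn (n : nat) (v : 'cV[R]_n) : R := \sum_(i < n) v i 0 ^+ 2.
Arguments sqn {n}.

Lemma sqn_ge0 n (v : 'cV[R]_n) : 0 <= sqn v.
Proof. by apply: sumr_ge0 => i _; apply: sqr_ge0. Qed.

Lemma sqn_term n (v : 'cV[R]_n) i : v i 0 ^+ 2 <= sqn v.
Proof.
rewrite /sqn (bigD1 i) //= lerDl; apply: sumr_ge0 => j _; apply: sqr_ge0.
Qed.

Lemma sqnZ n (c : R) (v : 'cV[R]_n) : sqn (c *: v) = c ^+ 2 * sqn v.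
Proof.
by rewrite /sqn mulr_sumr; apply: eq_bigr => i _; rewrite mxE exprMn.
Qed.

Lemma sqn0 n : sqn (0 : 'cV[R]_n) = 0.
Proof. by rewrite /sqn big1 // => i _; rewrite mxE expr0n. Qed.

Lemma sqn_eq0 n (v : 'cV[R]_n) : sqn v = 0 -> v = 0.
Proof.
move=> H; apply/matrixP => i j; rewrite ord1 mxE.
have := @psumr_eq0P R _ xpredT (fun i => v i 0 ^+ 2) (fun i _ => sqr_ge0 _) H i isT.
by move/eqP; rewrite sqrf_eq0 => /eqP.
Qed.

Lemma specnorm_props m n (A : 'M[R]_(m, n)) :
  0 <= specnorm A /\ forall v, sqn (A *m v) <= specnorm A ^+ 2 * sqn v.
Proof.
set S := [set r | exists v : 'cV[R]_n, vnorm2 v <= 1 /\ r = vnorm2 (A *m v)].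
have vn0 k : vnorm2 (0 : 'cV[R]_k) = 0.
  by rewrite /vnorm2 -/(sqn _) sqn0 sqrtr0.
have S0 : S 0.
  by rewrite /S /=; exists 0; rewrite mulmx0 !vn0; split.
pose B := Num.sqrt (\sum_(k < m) (\sum_(i < n) `|A k i|) ^+ 2).
have ubS : has_ubound S.
  rewrite /has_ubound /nonempty; exists B; rewrite /ubound /= => r [v [v1 ->]].
  rewrite /vnorm2 /B ler_sqrt; last by apply: sumr_ge0 => k _; apply: sqr_ge0.
  have sv : sqn v <= 1.
    by move: v1; rewrite /vnorm2 -/(sqn v) -{1}sqrtr1 ler_sqrt.
  apply: ler_sum => k _.
  have vi i : `|v i 0| <= 1.
    have := sqn_term v i; rewrite -(real_normK (num_real (v i 0))) => h.
    have : `|v i 0| ^+ 2 <= 1 by apply: le_trans h sv.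
    have := normr_ge0 (v i 0); nra.
  have H : `|(A *m v) k 0| <= \sum_(i < n) `|A k i|.
    rewrite mxE; apply: (le_trans (ler_norm_sum _ _ _)).
    apply: ler_sum => i _; rewrite normrM.
    by apply: ler_piMr => //.
  rewrite -(real_normK (num_real ((A *m v) k 0))).
  have := normr_ge0 ((A *m v) k 0); nra.
have a0 : 0 <= specnorm A by apply: (ub_le_sup ubS).
split => // d.
have [d0|dn0] := eqVneq (sqn d) 0.
  by rewrite (sqn_eq0 d0) mulmx0 !sqn0 mulr0.
have dpos : 0 < sqn d by rewrite lt_neqAle eq_sym dn0 sqn_ge0.
set s := Num.sqrt (sqn d).
have s0 : 0 < s by rewrite sqrtr_gt0.
have ss : s ^+ 2 = sqn d by rewrite sqr_sqrtr // ltW.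
have inS : S (vnorm2 (A *m (s^-1 *: d))).
  exists (s^-1 *: d); split => //.
  rewrite /vnorm2 -/(sqn _) sqnZ exprVn ss mulVf // sqrtr1 //.
have := ub_le_sup ubS inS.
rewrite /vnorm2 -/(sqn _) -scalemxAr sqnZ exprVn ss -/(specnorm A) => h.
have h2 : (sqn d)^-1 * sqn (A *m d) <= specnorm A ^+ 2.
  have q0 : 0 <= (sqn d)^-1 * sqn (A *m d) by apply: mulr_ge0; [rewrite invr_ge0 sqn_ge0|apply: sqn_ge0].
  rewrite -(sqr_sqrtr q0).
  by apply: lerXn2r => //; rewrite ?nnegrE ?sqrtr_ge0.
have := ler_wpM2l (sqn_ge0 d) h2.
by rewrite mulrA mulfV // mul1r mulrC.
Qed.

Lemma bil_bound m n (A : 'M[R]_(m, n)) (u : 'cV[R]_m) (v : 'cV[R]_n) :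
  - (specnorm A * (sqn u + sqn v)) <= 2 * \sum_(k < m) u k 0 * (A *m v) k 0.
Proof.
have [a0 H] := specnorm_props A.
set a := specnorm A in a0 H *.
set w := A *m v.
have Hw := H v.
have [az|anz] := eqVneq a 0.
  have : sqn w = 0 by apply/eqP; rewrite eq_le sqn_ge0 andbT; move: Hw; rewrite az expr0n mul0r.
  move/sqn_eq0 => ->; rewrite az mul0r oppr0 big1 ?mulr0 // => k _; rewrite mxE mulr0 //.
have apos : 0 < a by rewrite lt_neqAle eq_sym anz.
have step : \sum_(k < m) - (a * u k 0 ^+ 2 + w k 0 ^+ 2 / a) <= \sum_(k < m) 2 * (u k 0 * w k 0).
  apply: ler_sum => k _.
  have : 0 <= (a * u k 0 + w k 0) ^+ 2 by apply: sqr_ge0.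
  move=> h.
  have e : - (a * u k 0 ^+ 2 + w k 0 ^+ 2 / a) = - ((a * u k 0 + w k 0) ^+ 2) / a + 2 * (u k 0 * w k 0).
    by field; rewrite gt_eqF.
  have p : 0 <= (a * u k 0 + w k 0) ^+ 2 / a by apply: divr_ge0 => //; apply: ltW.
  rewrite e mulNr; lra.
move: step; rewrite sumrN big_split /= -mulr_sumr -mulr_sumr -mulr_suml -/(sqn u) -/(sqn w) => step.
have : sqn w / a <= a * sqn v.
  rewrite ler_pdivrMr // mulrC mulrA -expr2; exact: Hw.
lra.
Qed.
End D.

Section E.
Variable R : realType.
Variables (N T : nat) (K : nat -> nat) (X : 'M[R]_(K 0%N, T))
  (S : 'M[R]_(K 0%N, K 1%N)) (gamma0 : 'M[R]_(K 0%N, T))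
  (delta eps : nat -> R) (theta : forall i : 'I_N, 'M[R]_(K i.+1, K i.+2)).

Definition Gfam := forall j : 'I_N.+1, 'M[R]_(K j.+1, T).
Definition LL (G : Gfam) := EON_L X S gamma0 delta eps theta G.
Definition mixf (lam : R) (G G' : Gfam) : Gfam := fun j => lam *: G j + (1 - lam) *: G' j.

Lemma mixE lam G G' j k t : mixf lam G G' j k t = lam * G j k t + (1 - lam) * G' j k t.
Proof. by rewrite /mixf !mxE. Qed.

Lemma comb n (F F' H : 'I_n -> R) (a b : R) :
  a * (\sum_(i < n) F i) + b * (\sum_(i < n) F' i) - \sum_(i < n) H i =
  \sum_(i < n) (a * F i + b * F' i - H i).
Proof. by rewrite !mulr_sumr -big_split -sumrB. Qed.

Lemma comb_scal (a b c x y z : R) : a * (c * x) + b * (c * y) - c * z = c * (a * x + b * y - z).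
Proof. ring. Qed.

Lemma per_t_key (lam a b c e a' b' e' a'' b'' e'' : R) :
  lam * (a - b + (c + e)) + (1 - lam) * (a' - b' + (c + e')) - (a'' - b'' + (c + e'')) =
  (lam * a + (1 - lam) * a' - a'') - (lam * b + (1 - lam) * b' - b'') + (lam * e + (1 - lam) * e' - e'').
Proof. ring. Qed.

Definition Bd (G G' : Gfam) t := \sum_(i < N) delta i.+1 *
  (\sum_(k < K i.+1) \sum_(k' < K i.+2)
     (G (prevord i) k t - G' (prevord i) k t) * (G (nextord i) k' t - G' (nextord i) k' t) * ln (theta i k k')).

Definition entgap lam (G G' : Gfam) t := \sum_(j < N.+1) eps j.+1 *
  \sum_(k < K j.+1) (lam * xlogx (G j k t) + (1 - lam) * xlogx (G' j k t) - xlogx (mixf lam G G' j k t)).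

Lemma L_gap lam (G G' : Gfam) :
  lam * LL G + (1 - lam) * LL G' - LL (mixf lam G G') =
  \sum_(t < T) (entgap lam G G' t - lam * (1 - lam) * Bd G G' t).
Proof.
rewrite /LL /EON_L comb; apply: eq_bigr => t _.
rewrite per_t_key.
have -> : forall F : 'I_(K 1) -> R,
   lam * (\sum_(k1 < K 1) G ord0 k1 t * F k1) + (1 - lam) * (\sum_(k1 < K 1) G' ord0 k1 t * F k1)
   - (\sum_(k1 < K 1) mixf lam G G' ord0 k1 t * F k1) = 0.
  move=> F; rewrite comb big1 // => k _; rewrite mixE; ring.
have -> : lam * (\sum_(i < N) delta i.+1 * (\sum_(k < K i.+1) \sum_(k' < K i.+2)
              (G (prevord i) k t) * (G (nextord i) k' t) * ln (theta i k k')))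
  + (1 - lam) * (\sum_(i < N) delta i.+1 * (\sum_(k < K i.+1) \sum_(k' < K i.+2)
              (G' (prevord i) k t) * (G' (nextord i) k' t) * ln (theta i k k')))
  - (\sum_(i < N) delta i.+1 * (\sum_(k < K i.+1) \sum_(k' < K i.+2)
              (mixf lam G G' (prevord i) k t) * (mixf lam G G' (nextord i) k' t) * ln (theta i k k')))
  = lam * (1 - lam) * Bd G G' t.
  rewrite comb /Bd mulr_sumr; apply: eq_bigr => i _.
  rewrite comb_scal mulrCA; congr (_ * _).
  rewrite comb mulr_sumr; apply: eq_bigr => k _.
  rewrite comb mulr_sumr; apply: eq_bigr => k' _.
  rewrite !mixE; ring.
rewrite comb sub0r addrC /entgap; congr (_ - _); apply: eq_bigr => j _.
by rewrite comb_scal comb.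
Qed.

Definition dv (G G' : Gfam) (t : 'I_T) (j : 'I_N.+1) : 'cV[R]_(K j.+1) :=
  \col_k (G j k t - G' j k t).
Definition bprev (j : nat) : R := if j is n.+1 then normA delta theta n else 0.

Lemma colstoch_le1 a b (M : 'M[R]_(a, b)) : colstoch M -> forall i j, 0 <= M i j <= 1.
Proof.
move=> [h0 h1] i j; rewrite h0 /= -(h1 j) (bigD1 i) //= lerDl.
by apply: sumr_ge0 => l _.
Qed.

Lemma normA_ge0 m : 0 <= normA delta theta m.
Proof.
rewrite /normA; case: insub => [i|] //.
by case: (specnorm_props (Amat delta theta i)).
Qed.

Lemma bprev_ge0 m : 0 <= bprev m.
Proof. by case: m => [|m] //=; apply: normA_ge0. Qed.

Lemma ent_lb lam (G G' : Gfam) t :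
  (forall j, colstoch (G j)) -> (forall j, colstoch (G' j)) -> 0 < lam < 1 ->
  (forall j : 'I_N.+1, 0 <= eps j.+1) ->
  lam * (1 - lam) * \sum_(j < N.+1) eps j.+1 / 2 * sqn (dv G G' t j) <= entgap lam G G' t.
Proof.
move=> dG dG' l01 e0.
rewrite /entgap mulr_sumr; apply: ler_sum => j _.
have H : eps j.+1 * \sum_(k < K j.+1) (lam * (1 - lam) * (G j k t - G' j k t) ^+ 2 / 2) <=
    eps j.+1 * \sum_(k < K j.+1) (lam * xlogx (G j k t) + (1 - lam) * xlogx (G' j k t)
       - xlogx (mixf lam G G' j k t)).
  apply: ler_wpM2l => //; apply: ler_sum => k _.
  by rewrite mixE; apply: xlogx_gap => //; apply: colstoch_le1.
apply: le_trans H; rewrite le_eqVlt; apply/orP; left; apply/eqP.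
rewrite /sqn !mulr_sumr; apply: eq_bigr => k _; rewrite mxE; ring.
Qed.

Lemma bil_term (G G' : Gfam) t (i : 'I_N) :
  - (delta i.+1 * (\sum_(k < K i.+1) \sum_(k' < K i.+2)
     (G (prevord i) k t - G' (prevord i) k t) * (G (nextord i) k' t - G' (nextord i) k' t) * ln (theta i k k')))
  = \sum_(k' < K i.+2) (dv G G' t (nextord i)) k' 0 * (Amat delta theta i *m dv G G' t (prevord i)) k' 0.
Proof.
rewrite (eq_bigr (fun k' => \sum_(k < K i.+1) (dv G G' t (nextord i)) k' 0 *
   (Amat delta theta i k' k * dv G G' t (prevord i) k 0))); last first.
  by move=> k' _; rewrite [X in _ * X]mxE mulr_sumr.
rewrite exchange_big /= mulr_sumr -sumrN; apply: eq_bigr => k _.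
rewrite mulr_sumr -sumrN; apply: eq_bigr => k' _.
rewrite !mxE; ring.
Qed.

Lemma P1 (G G' : Gfam) t :
  \sum_(j < N.+1) normA delta theta j * sqn (dv G G' t j) =
  \sum_(i < N) specnorm (Amat delta theta i) * sqn (dv G G' t (prevord i)).
Proof.
rewrite big_ord_recr /=.
rewrite {2}/normA insubN ?ltnn // mul0r addr0.
by apply: eq_bigr => i _; rewrite /normA /= valK.
Qed.

Lemma P2 (G G' : Gfam) t :
  \sum_(j < N.+1) bprev j * sqn (dv G G' t j) =
  \sum_(i < N) specnorm (Amat delta theta i) * sqn (dv G G' t (nextord i)).
Proof.
have H : forall F : 'I_N.+1 -> R, \sum_(j < N.+1) F j = F ord0 + \sum_(i < N) F (nextord i).
  move=> F; rewrite big_ord_recl; congr (_ + _); apply: eq_bigr => i _; congr F; exact: val_inj.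
rewrite (H (fun j => bprev j * sqn (dv G G' t j))); cbv beta.
have -> : bprev ord0 = 0 by [].
rewrite mul0r add0r; apply: eq_bigr => i _.
have -> : bprev (nextord i) = normA delta theta i by [].
by rewrite /normA valK.
Qed.

Lemma Bd_ub (G G' : Gfam) t :
  Bd G G' t <= \sum_(j < N.+1) (normA delta theta j + bprev j) / 2 * sqn (dv G G' t j).
Proof.
have -> : \sum_(j < N.+1) (normA delta theta j + bprev j) / 2 * sqn (dv G G' t j) =
   (\sum_(j < N.+1) normA delta theta j * sqn (dv G G' t j) +
    \sum_(j < N.+1) bprev j * sqn (dv G G' t j)) / 2.
  rewrite -big_split mulr_suml; apply: eq_bigr => j _ /=; ring.
rewrite P1 P2 -big_split mulr_suml /Bd; apply: ler_sum => i _ /=.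
have := bil_bound (Amat delta theta i) (dv G G' t (nextord i)) (dv G G' t (prevord i)).
rewrite -bil_term.
set x := delta i.+1 * _.
lra.
Qed.

Lemma strict_gap lam (G G' : Gfam) :
  (forall j, colstoch (G j)) -> (forall j, colstoch (G' j)) -> 0 < lam < 1 -> G <> G' ->
  (forall j : 'I_N.+1, normA delta theta j + bprev j < eps j.+1) ->
  0 < \sum_(t < T) (entgap lam G G' t - lam * (1 - lam) * Bd G G' t).
Proof.
move=> dG dG' l01 GG' cpos.
have e0 : forall j : 'I_N.+1, 0 <= eps j.+1.
  move=> j; have := cpos j; have := normA_ge0 j; have := bprev_ge0 j; lra.
have lm0 : 0 < lam * (1 - lam) by case/andP: l01 => l0 l1; apply: mulr_gt0; lra.
pose P t := \sum_(j < N.+1) (eps j.+1 - normA delta theta j - bprev j) / 2 * sqn (dv G G' t j).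
have Pge0 t : 0 <= P t.
  apply: sumr_ge0 => j _; apply: mulr_ge0; last exact: sqn_ge0.
  have := cpos j; lra.
have low t : lam * (1 - lam) * P t <= entgap lam G G' t - lam * (1 - lam) * Bd G G' t.
  have h1 := ent_lb t dG dG' l01 e0.
  have h2 := Bd_ub G G' t.
  have h3 : lam * (1 - lam) * Bd G G' t <=
      lam * (1 - lam) * \sum_(j < N.+1) (normA delta theta j + bprev j) / 2 * sqn (dv G G' t j).
    by apply: ler_wpM2l => //; apply: ltW.
  have -> : P t = \sum_(j < N.+1) eps j.+1 / 2 * sqn (dv G G' t j) -
      \sum_(j < N.+1) (normA delta theta j + bprev j) / 2 * sqn (dv G G' t j).
    rewrite -sumrB; apply: eq_bigr => j _; ring.
  lra.
have [[j0 [k0 [t0 ne]]] | nex] :=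
    pselect (exists (j : 'I_N.+1) (k : 'I_(K j.+1)) (t : 'I_T), G j k t != G' j k t); last first.
  exfalso; apply: GG'; apply: functional_extensionality_dep => j.
  apply/matrixP => k t; case: (eqVneq (G j k t) (G' j k t)) => // h.
  by exfalso; apply: nex; exists j, k, t.
have Pt0 : 0 < P t0.
  rewrite /P (bigD1 j0) //=.
  have r0 : 0 <= \sum_(j < N.+1 | j != j0) (eps j.+1 - normA delta theta j - bprev j) / 2 * sqn (dv G G' t0 j).
    apply: sumr_ge0 => j _; apply: mulr_ge0; last exact: sqn_ge0.
    have := cpos j; lra.
  have s0 : 0 < sqn (dv G G' t0 j0).
    apply: (lt_le_trans _ (sqn_term _ k0)).
    by rewrite mxE lt_neqAle sqr_ge0 andbT eq_sym sqrf_eq0 subr_eq0.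
  have c0 : 0 < (eps j0.+1 - normA delta theta j0 - bprev j0) / 2 by have := cpos j0; lra.
  have := mulr_gt0 c0 s0; lra.
apply: (lt_le_trans _ (ler_sum _ (fun t _ => low t))).
rewrite (bigD1 t0) //=.
have r0 : 0 <= \sum_(t < T | t != t0) lam * (1 - lam) * P t.
  by apply: sumr_ge0 => t _; apply: mulr_ge0; [apply: ltW | apply: Pge0].
have := mulr_gt0 lm0 Pt0; lra.
Qed.
End E.

Local Open Scope classical_set_scope.

Section Cont.
Variable R : realType.
Variable M : nat.
Implicit Types (x : 'rV[R]_M).

Lemma cont_add x (f g : 'rV[R]_M -> R) : {for x, continuous f} -> {for x, continuous g} ->
  {for x, continuous (fun v => f v + g v)}.
Proof. move=> hf hg; exact: (continuousD hf hg). Qed.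

Lemma cont_sub x (f g : 'rV[R]_M -> R) : {for x, continuous f} -> {for x, continuous g} ->
  {for x, continuous (fun v => f v - g v)}.
Proof. move=> hf hg; exact: (continuousB hf hg). Qed.

Lemma cont_mul x (f g : 'rV[R]_M -> R) : {for x, continuous f} -> {for x, continuous g} ->
  {for x, continuous (fun v => f v * g v)}.
Proof. move=> hf hg; exact: (continuousM hf hg). Qed.

Lemma cont_opp x (f : 'rV[R]_M -> R) : {for x, continuous f} ->
  {for x, continuous (fun v => - f v)}.
Proof. move=> hf; exact: (continuousN hf). Qed.

Lemma cont_cst x (c : R) : {for x, continuous (fun _ : 'rV[R]_M => c)}.
Proof. exact: cst_continuous. Qed.

Lemma cont_xlogx x (f : 'rV[R]_M -> R) : {for x, continuous f} ->
  {for x, continuous (fun v => xlogx (f v))}.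
Proof. move=> hf; apply: (@continuous_comp _ _ _ f (@xlogx R) x hf); exact: xlogx_cont. Qed.

Lemma cont_sum x (I : Type) (r : seq I) (F : I -> 'rV[R]_M -> R) :
  (forall i, {for x, continuous (F i)}) -> {for x, continuous (fun v => \sum_(i <- r) F i v)}.
Proof.
move=> hF; elim: r => [|a r IH].
  have -> : (fun v => \sum_(i <- [::]) F i v) = (fun=> 0) by apply: funext => v; rewrite big_nil.
  exact: cont_cst.
have -> : (fun v => \sum_(i <- a :: r) F i v) = (fun v => F a v + \sum_(i <- r) F i v).
  by apply: funext => v; rewrite big_cons.
exact: cont_add.
Qed.

Lemma cont_coord x p : {for x, continuous (fun v : 'rV[R]_M => v ord0 p)}.
Proof. exact: coord_continuous. Qed.
End Cont.

Section Enc.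
Variable R : realType.
Variables (N T : nat) (K : nat -> nat) (X : 'M[R]_(K 0%N, T))
  (S : 'M[R]_(K 0%N, K 1%N)) (gamma0 : 'M[R]_(K 0%N, T))
  (delta eps : nat -> R) (theta : forall i : 'I_N, 'M[R]_(K i.+1, K i.+2)).

Definition Idx := {j : 'I_N.+1 & ('I_(K j.+1) * 'I_T)%type}.
Definition MM := #|{: Idx}|.
Definition mkidx (j : 'I_N.+1) (k : 'I_(K j.+1)) (t : 'I_T) : Idx :=
  existT (fun j : 'I_N.+1 => ('I_(K j.+1) * 'I_T)%type) j (k, t).

Definition dec (v : 'rV[R]_MM) : Gfam R N T K := fun j => \matrix_(k, t) v ord0 (enum_rank (mkidx k t)).
Definition enc (G : Gfam R N T K) : 'rV[R]_MM :=
  \row_p (let x := enum_val p in G (tag x) (tagged x).1 (tagged x).2).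

Lemma dec_enc G : dec (enc G) = G.
Proof.
apply: functional_extensionality_dep => j; apply/matrixP => k t.
by rewrite !mxE enum_rankK.
Qed.

Lemma decE v j k t : dec v j k t = v ord0 (enum_rank (mkidx k t)).
Proof. by rewrite mxE. Qed.

Definition Adom := [set v : 'rV[R]_MM | forall j, colstoch (dec v j)].

Lemma Adom_nonempty : (forall j : 'I_N.+1, (0 < K j.+1)%N) -> Adom !=set0.
Proof.
move=> Kp.
pose G0 : Gfam R N T K := fun j => \matrix_(k, t) (K j.+1)%:R^-1.
exists (enc G0); rewrite /Adom /= dec_enc => j; split.
  by move=> k t; rewrite mxE invr_ge0 ler0n.
move=> t; under eq_bigr => k _ do rewrite mxE.
rewrite sumr_const card_ord -(mulr_natr ((K j.+1)%:R^-1)) mulVf // pnatr_eq0 -lt0n; exact: Kp.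
Qed.

Lemma Adom_entries v : Adom v -> forall p, 0 <= v ord0 p <= 1.
Proof.
move=> Av p.
have := Av (tag (enum_val p)).
move/colstoch_le1 => /(_ (tagged (enum_val p)).1 (tagged (enum_val p)).2).
rewrite decE.
have -> : mkidx (tagged (enum_val p)).1 (tagged (enum_val p)).2 = enum_val p.
  by case: (enum_val p) => j [k t].
by rewrite enum_valK.
Qed.

Lemma Adom_bounded : bounded_set Adom.
Proof.
exists 1; split; first exact: num_real.
move=> r r1 v Av.
rewrite /= [X in X <= _]/Num.Def.normr /= mx_normrE.
apply: bigmax_le; first lra.
move=> [i p] _ /=; rewrite ord1.
have := Adom_entries Av p; rewrite ger0_norm; last by case/andP: (Adom_entries Av p).
move/andP => [_ h]; lra.
Qed.

Lemma cont_dec x j k t : {for x, continuous (fun v : 'rV[R]_MM => dec v j k t)}.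
Proof.
have -> : (fun v : 'rV[R]_MM => dec v j k t) = (fun v => v ord0 (enum_rank (mkidx k t))).
  by apply: funext => v; rewrite decE.
exact: cont_coord.
Qed.

Ltac cont := repeat first [ apply: cont_sum => ? | apply: cont_add | apply: cont_sub
  | apply: cont_opp | apply: cont_mul | apply: cont_xlogx | apply: cont_dec | apply: cont_cst ].

Lemma LL_cont x : {for x, continuous (fun v => LL X S gamma0 delta eps theta (dec v))}.
Proof. rewrite /LL /EON_L; cont. Qed.

Lemma closed_ge0 (g : 'rV[R]_MM -> R) : continuous g -> closed [set v | 0 <= g v].
Proof.
move=> cg; have -> : [set v | 0 <= g v] = g @^-1` [set x | 0 <= x] by [].
by apply: preimage_closed; [move=> v _; exact: cg | exact: closed_ge].
Qed.

Lemma closed_eq1 (g : 'rV[R]_MM -> R) : continuous g -> closed [set v | g v = 1].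
Proof.
move=> cg; have -> : [set v | g v = 1] = g @^-1` [set x | x = 1] by [].
by apply: preimage_closed; [move=> v _; exact: cg | exact: closed_eq].
Qed.

Lemma Adom_closed : closed Adom.
Proof.
have -> : Adom = \bigcap_(j in [set: 'I_N.+1]) (\bigcap_(kt in [set: 'I_(K j.+1) * 'I_T]) [set v | 0 <= dec v j kt.1 kt.2]
     `&` \bigcap_(t in [set: 'I_T]) [set v | \sum_(k < K j.+1) dec v j k t = 1]).
  apply/seteqP; split => v /=.
    move=> Av j _; split => [[k t] _|t _] /=; by case: (Av j).
  move=> H j; split => [k t|t].
    by case: (H j I) => /(_ (k, t) I).
  by case: (H j I) => _ /(_ t I).
apply: closed_bigI => j _; apply: closedI.
  apply: closed_bigI => kt _; apply: closed_ge0 => x; exact: cont_dec.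
apply: closed_bigI => t _; apply: closed_eq1 => x; cont.
Qed.
End Enc.

Unset Implicit Arguments. Set Strict Implicit.
Local Close Scope classical_set_scope.

Lemma colstoch_mix (R : realType) a b (A B : 'M[R]_(a, b)) (lam : R) :
  colstoch A -> colstoch B -> 0 <= lam <= 1 -> colstoch (lam *: A + (1 - lam) *: B).
Proof.
move=> [A0 A1] [B0 B1] /andP[l0 l1]; split.
  move=> i j; rewrite !mxE; apply: addr_ge0; apply: mulr_ge0 => //; lra.
move=> j; under eq_bigr => i _ do rewrite !mxE.
by rewrite big_split /= -!mulr_sumr A1 B1 !mulr1 addrC subrK.
Qed.

Theorem lemma7 (R : realType) (N T : nat) (K : nat -> nat)
  (X : 'M[R]_(K 0%N, T)) (S : 'M[R]_(K 0%N, K 1%N)) (gamma0 : 'M[R]_(K 0%N, T))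
  (delta eps : nat -> R)
  (theta : forall i : 'I_N, 'M[R]_(K i.+1, K i.+2))
  (K_pos : forall n : nat, (n <= N.+1)%N -> (0 < K n)%N)
  (gamma0_ge0 : forall d t, 0 <= gamma0 d t)
  (delta_gt0 : forall n : nat, (1 <= n <= N)%N -> 0 < delta n)
  (eps_gt0 : forall n : nat, (n <= N.+1)%N -> 0 < eps n)
  (theta_col : forall i : 'I_N, colstoch (theta i))
  (theta_pos : forall (i : 'I_N) k k', 0 < theta i k k')
  (hcond : forall (n : 'I_N) (m : nat), (1 <= m <= N.+1)%N ->
      normA delta theta n + normA delta theta n.+1 < eps m) :
  let L := EON_L X S gamma0 delta eps theta in
  let dom := fun G : forall j : 'I_N.+1, 'M[R]_(K j.+1, T) =>
               forall j, colstoch (G j) in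
  (* strict convexity on the product of the P_L's *)
  (forall (G G' : forall j : 'I_N.+1, 'M[R]_(K j.+1, T)) (lam : R),
      dom G -> dom G' -> G <> G' -> 0 < lam < 1 ->
      L (fun j => lam *: G j + (1 - lam) *: G' j) < lam * L G + (1 - lam) * L G')
  /\
  (* existence and uniqueness of the minimizer *)
  (exists Ghat : forall j : 'I_N.+1, 'M[R]_(K j.+1, T),
      dom Ghat /\ (forall G, dom G -> L Ghat <= L G) /\
      (forall G, dom G -> (forall G', dom G' -> L G <= L G') -> G = Ghat)).
Proof.
move=> L dom.
have Kp : forall j : 'I_N.+1, (0 < K j.+1)%N by move=> j; apply: K_pos; exact: ltn_ord.
have cpos : forall j : 'I_N.+1, normA delta theta j + bprev delta theta j < eps j.+1.
  case=> [[|j] Hj] /=.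
    rewrite addr0; have [N0|Npos] := posnP N.
      rewrite /normA insubN; last by rewrite N0.
      by apply: eps_gt0.
    have := hcond (Ordinal Npos) 1%N ltac:(by rewrite /= ltnS) => /=.
    have := normA_ge0 delta theta 1%N; lra.
  have Hj' : (j < N)%N by [].
  have := hcond (Ordinal Hj') j.+2 ltac:(by rewrite /=; exact: Hj) => /=.
  lra.
have conv : forall (G G' : forall j : 'I_N.+1, 'M[R]_(K j.+1, T)) (lam : R),
      dom G -> dom G' -> G <> G' -> 0 < lam < 1 ->
      L (fun j => lam *: G j + (1 - lam) *: G' j) < lam * L G + (1 - lam) * L G'.
  move=> G G' lam dG dG' ne l01.
  have E := L_gap X S gamma0 delta eps theta lam G G'.
  have P := strict_gap dG dG' l01 ne cpos.
  change (LL X S gamma0 delta eps theta (mixf lam G G') <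
     lam * LL X S gamma0 delta eps theta G + (1 - lam) * LL X S gamma0 delta eps theta G').
  lra.
split; first exact: conv.
have cf : {within (@Adom R N T K), continuous (fun v => LL X S gamma0 delta eps theta (dec v))}%classic.
  by apply: continuous_subspaceT => x; exact: LL_cont.
have [c cA cmin] := EVT_min_rV (Adom_nonempty R T Kp)
  (bounded_closed_compact (Adom_bounded R N T K) (@Adom_closed R N T K)) cf.
have cA' : Adom c by move: cA; rewrite inE.
have minc : forall G, dom G -> L (dec c) <= L G.
  move=> G dG.
  have := cmin (enc G); rewrite dec_enc; apply.
  by rewrite inE /Adom /= dec_enc.
exists (dec c); split; first exact: cA'.
split; first exact: minc.
move=> G dG Gmin.
apply: contrapT => ne.
have l01 : (0 < (1 / 2 : R)) && (1 / 2 < (1 : R)) by apply/andP; split; lra.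
have dM : dom (fun j => 1 / 2 *: G j + (1 - 1 / 2) *: dec c j).
  move=> j; apply: colstoch_mix; [exact: dG | exact: cA' | lra].
have h1 := conv G (dec c) (1 / 2) dG cA' ne l01.
have h2 := Gmin _ dM.
have h3 := Gmin _ cA'.
have h4 := minc G dG.
move: h1 h2 h3 h4.
move: (L G) (L (dec c)) (L (fun j => 1 / 2 *: G j + (1 - 1 / 2) *: dec c j)) => a b m.
move=> h1 h2 h3 h4.
clear ne; lra.
Qed.
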